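(* Let $C$ be a linear code over $\mathbb{Z}_4+u\mathbb{Z}_4$ of length $n$ and $C^{\perp}$ its dual. Then $$Lee_{C^{\perp}}(W,X)=\frac{1}{|C|}\,Lee_C(W+X,W-X).$$
   Context: $\mathbb{Z}_4+u\mathbb{Z}_4$ is the commutative ring of characteristic $4$ with $u^2=0$; a linear code of length $n$ is a submodule of $(\mathbb{Z}_4+u\mathbb{Z}_4)^n$, and $C^\perp$ is its dual with respect to the Euclidean inner product $\sum_i x_iy_i$ computed in the ring. The Lee weight on $\mathbb{Z}_4$ is $0,1,2,1$ for $0,1,2,3$; the Lee weight on $\mathbb{Z}_4+u\mathbb{Z}_4$ is $w_L(a+ub)=w_L(b)+w_L(a+b)$, extended additively to vectors. The Lee weight enumerator is $Lee_C(W,X)=\sum_{c\in C}W^{4n-w_L(c)}X^{w_L(c)}$. *)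

(* Defs.v *)
From HB Require Import structures.
From mathcomp Require Import all_boot all_order all_algebra.
From mathcomp Require Import mpoly.
Set Implicit Arguments. Unset Strict Implicit. Unset Printing Implicit Defensive.
Import GRing.Theory.
Local Open Scope ring_scope.

(* The ring Z4 + u Z4 (u^2 = 0): the pair (a, b) represents a + u b. *)
Definition R4 := ('Z_4 * 'Z_4)%type.

Definition R4add (x y : R4) : R4 := (x.1 + y.1, x.2 + y.2).
Definition R4mul (x y : R4) : R4 := (x.1 * y.1, x.1 * y.2 + x.2 * y.1).
Definition R4zero : R4 := (0, 0).

Definition vec (n : nat) := {ffun 'I_n -> R4}.

Definition vadd n (x y : vec n) : vec n := [ffun i => R4add (x i) (y i)].
Definition vscale n (r : R4) (x : vec n) : vec n := [ffun i => R4mul r (x i)].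
Definition vzero n : vec n := [ffun => R4zero].

Definition is_linear_code n (C : {set vec n}) : Prop :=
  [/\ vzero n \in C,
      (forall x y, x \in C -> y \in C -> vadd x y \in C) &
      (forall r x, x \in C -> vscale r x \in C)].

Definition inner n (x y : vec n) : R4 :=
  foldr R4add R4zero [seq R4mul (x i) (y i) | i <- enum 'I_n].

Definition dual n (C : {set vec n}) : {set vec n} :=
  [set y | [forall x in C, inner x y == R4zero]].

Definition leeZ4 (a : 'Z_4) : nat :=
  if a == 0 then 0%N else if a == 2%:R then 2%N else 1%N.
Definition leeR4 (x : R4) : nat := addn (leeZ4 x.2) (leeZ4 (x.1 + x.2)%R).
Definition leeW n (x : vec n) : nat := (\sum_(i < n) leeR4 (x i))%N.

Definition LeeEnum n (C : {set vec n}) (P Q : {mpoly rat[2]}) : {mpoly rat[2]} :=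
  \sum_(c in C) P ^+ (4 * n - leeW c) * Q ^+ (leeW c).

Definition varW : {mpoly rat[2]} := 'X_(0 : 'I_2).
Definition varX : {mpoly rat[2]} := 'X_(1 : 'I_2).

(* Main.v *)
Require Import Defs.
From mathcomp Require Import all_boot all_order all_algebra all_field.
From mathcomp Require Import mpoly.
From mathcomp Require Import ring.
Set Implicit Arguments. Unset Strict Implicit. Unset Printing Implicit Defensive.
Import GRing.Theory Num.Theory.
Local Open Scope ring_scope.

Fixpoint m4 (n : nat) : nat :=
  match n with 0 => 0 | 1 => 1 | 2 => 2 | 3 => 3 | S (S (S (S k))) => m4 k end%N.
Definition lz (n : nat) : nat := match m4 n with 0 => 0 | 2 => 2 | _ => 1 end%N.
Definition Ln (c d : nat) : nat := Nat.add (lz d) (lz (Nat.add c d)).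
Definition pn (a b c d : nat) : nat :=
  m4 (Nat.add (Nat.mul a c) (Nat.add (Nat.mul a d) (Nat.mul b c))).

Lemma m4E n : m4 n = (n %% 4)%N.
Proof.
elim/ltn_ind: n => -[|[|[|[|n]]]] IH //=.
rewrite IH; last by rewrite ltnS leqW // leqW // leqW.
by rewrite -(modnDr n 4) addn4.
Qed.

Lemma valD4 (x y : 'Z_4) : val (x + y) = m4 (val x + val y).
Proof. by rewrite m4E. Qed.
Lemma valM4 (x y : 'Z_4) : val (x * y) = m4 (val x * val y).
Proof. by rewrite m4E. Qed.

Lemma sum4 (S : nmodType) (F : nat -> S) : \sum_(0 <= c < 4) F c = F 0%N + F 1%N + F 2%N + F 3%N.
Proof. by rewrite big_mkord !big_ord_recr big_ord0 /= add0r. Qed.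

Section Coord.
Variables (S : comNzRingType) (j P Q : S).
Hypothesis hj : j ^+ 2 = -1.

Lemma coord_nat (a b : nat) : (a < 4)%N -> (b < 4)%N ->
  \sum_(0 <= c < 4) \sum_(0 <= d < 4) j ^+ (pn a b c d) * P ^+ (4 - Ln c d)%N * Q ^+ (Ln c d)
  = (P + Q) ^+ (4 - Ln a b)%N * (P - Q) ^+ (Ln a b).
Proof.
have hj3 : j ^+ 3 = - j by rewrite exprS hj mulrN1.
rewrite !sum4.
case: a => [|[|[|[|a]]]] // _; case: b => [|[|[|[|b]]]] // _;
  rewrite ?subnE; cbn [pn Ln lz m4 Nat.add Nat.mul Nat.sub subn_rec]; rewrite ?hj ?hj3; ring.
Qed.
End Coord.

Definition piZ (z : R4) : 'Z_4 := z.1 + z.2.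

Lemma m4K n : m4 (m4 n) = m4 n.
Proof. by rewrite !m4E modn_mod. Qed.

Lemma leeZ4E (t : 'Z_4) : leeZ4 t = lz (val t).
Proof. by case: t => -[|[|[|[|t]]]]. Qed.

Lemma leeR4E (c d : 'Z_4) : leeR4 (c, d) = Ln (val c) (val d).
Proof. by case: c => -[|[|[|[|c]]]] ? //; case: d => -[|[|[|[|d]]]] ? //. Qed.

Lemma piZE (a b c d : 'Z_4) :
  val (piZ (R4mul (a, b) (c, d))) = pn (val a) (val b) (val c) (val d).
Proof.
by case: a => -[|[|[|[|a]]]] ? //; case: b => -[|[|[|[|b]]]] ? //;
  case: c => -[|[|[|[|c]]]] ? //; case: d => -[|[|[|[|d]]]] ? //.
Qed.

Lemma sumZ4 (S : nmodType) (G : nat -> S) : \sum_(c : 'Z_4) G (val c) = \sum_(0 <= c < 4) G c.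
Proof. by rewrite big_mkord. Qed.

Section Coord2.
Variables (S : comNzRingType) (j P Q : S).
Hypothesis hj : j ^+ 2 = -1.

Lemma coordL (z : R4) :
  \sum_(w : R4) j ^+ (val (piZ (R4mul z w))) * P ^+ (4 - leeR4 w) * Q ^+ (leeR4 w)
  = (P + Q) ^+ (4 - leeR4 z) * (P - Q) ^+ (leeR4 z).
Proof.
case: z => a b.
rewrite -(pair_bigA _ (fun c d => j ^+ (val (piZ (R4mul (a, b) (c, d)))) * P ^+ (4 - leeR4 (c, d)) * Q ^+ (leeR4 (c, d)))).
under eq_bigr => c _ do under eq_bigr => d _ do rewrite piZE leeR4E.
under eq_bigr => c _ do rewrite (sumZ4 (fun d => j ^+ pn (val a) (val b) (val c) d * P ^+ (4 - Ln (val c) d) * Q ^+ Ln (val c) d)).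
rewrite (sumZ4 (fun c => \sum_(0 <= d < 4) j ^+ pn (val a) (val b) c d * P ^+ (4 - Ln c d) * Q ^+ Ln c d)).
rewrite leeR4E.
exact (coord_nat P Q hj (ltn_ord a) (ltn_ord b)).
Qed.
End Coord2.


Lemma foldrE (s : seq R4) :
  foldr R4add R4zero s = (\sum_(z <- s) z.1, \sum_(z <- s) z.2).
Proof.
elim: s => [|z s IH]; first by rewrite !big_nil.
by rewrite /= IH !big_cons.
Qed.

Section Main.
Variable n : nat.
Implicit Types x y : vec n.

Definition psi x y : 'Z_4 := \sum_(i < n) piZ (R4mul (x i) (y i)).

Lemma innerE x y : inner x y =
  (\sum_(i < n) (R4mul (x i) (y i)).1, \sum_(i < n) (R4mul (x i) (y i)).2).
Proof. by rewrite /inner foldrE !big_map. Qed.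

Lemma psi_inner x y : psi x y = (inner x y).1 + (inner x y).2.
Proof. by rewrite innerE /psi -big_split. Qed.

Lemma psiD x x' y : psi (vadd x x') y = psi x y + psi x' y.
Proof.
rewrite /psi -big_split; apply: eq_bigr => i _.
rewrite /vadd ffunE /piZ /R4mul /R4add /=; ring.
Qed.

Lemma psi_u x y : psi (vscale (0, 1) x) y = (inner x y).1.
Proof.
rewrite innerE /psi; apply: eq_bigr => i _.
rewrite /vscale ffunE /piZ /R4mul /=; ring.
Qed.

Lemma dualP (C : {set vec n}) y : is_linear_code C ->
  reflect (forall x, x \in C -> psi x y = 0) (y \in dual C).
Proof.
case=> _ _ hS; rewrite inE; apply: (iffP forall_inP) => H x xC.
  by rewrite psi_inner (eqP (H x xC)) addr0.
have h1 := psi_u x y; rewrite H ?hS // in h1.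
have h2 := H x xC; rewrite psi_inner -h1 add0r in h2.
by rewrite [inner x y]surjective_pairing -h1 h2.
Qed.

Lemma in_shift (C : {set vec n}) x x0 : is_linear_code C -> x0 \in C ->
  (vadd x x0 \in C) = (x \in C).
Proof.
case=> _ hA hS x0C; apply/idP/idP => [h|]; last by move=> xC; apply: hA.
have -> : x = vadd (vadd x x0) (vscale (-1, 0) x0).
  apply/ffunP => i; rewrite !ffunE /R4add /R4mul /=.
  case: (x i) => a b; case: (x0 i) => c d /=; congr pair; ring.
by apply: hA => //; apply: hS.
Qed.

Lemma vadd_inj x0 : injective (fun x : vec n => vadd x x0).
Proof.
move=> x x' /ffunP H; apply/ffunP => i; have := H i; rewrite !ffunE /R4add.
move=> E; have /= h1 := congr1 fst E; have /= h2 := congr1 snd E.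
by rewrite [x i]surjective_pairing [x' i]surjective_pairing (addIr _ h1) (addIr _ h2).
Qed.

Section Orth.
Variables (S : idomainType) (j : S).
Hypotheses (hj : j ^+ 2 = -1) (h2 : (2%:R : S) != 0).

Definition chi (k : 'Z_4) : S := j ^+ (val k).

Lemma chiD a b : chi (a + b) = chi a * chi b.
Proof.
have j4 : j ^+ 4 = 1 by rewrite (exprM j 2 2) hj sqrrN expr1n.
rewrite /chi -exprD -[RHS](expr_mod _ j4). have E : val (a + b) = ((val a + val b) %% 4)%N by []. by rewrite E.
Qed.

Lemma chi0 : chi 0 = 1. Proof. by rewrite /chi expr0. Qed.
Lemma chi2 : chi 2%:R = -1. Proof. by rewrite /chi -hj. Qed.

Lemma orth (C : {set vec n}) y : is_linear_code C ->
  \sum_(x in C) chi (psi x y) = if y \in dual C then #|C|%:R else 0.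
Proof.
move=> hC; case: ifPn => hy.
  rewrite (eq_bigr (fun _ => 1)) ?sumr_const // => x xC.
  by move/dualP: hy => /(_ hC x xC) ->; rewrite chi0.
have [x1 x1C hx1] : exists2 x, x \in C & psi x y != 0.
  apply/exists_inP; apply: contraNT hy => /exists_inPn H.
  by apply/(dualP _ hC) => x xC; apply/eqP/negPn/H.
pose x0 := if psi x1 y == 2%:R then x1 else vadd x1 x1.
have x0C : x0 \in C by rewrite /x0; case: ifP => // _; case: hC => _ hA _; apply: hA.
have hx0 : psi x0 y = 2%:R.
  rewrite /x0; case: ifP => [/eqP //|]; rewrite psiD.
  by move: hx1; case: (psi x1 y) => -[|[|[|[|k]]]] ? //= _ _; apply/val_inj.
set T := \sum_(x in C) _.
have HT : T = T * chi 2%:R.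
  rewrite {1}/T (reindex_inj (vadd_inj (x0:=x0))) /= /T big_distrl /=.
  apply: eq_big => [x|x _]; first by rewrite in_shift.
  by rewrite psiD hx0 chiD.
move: HT; rewrite chi2 mulrN1 => /eqP; rewrite -subr_eq0 opprK -mulr2n -mulr_natl.
by rewrite mulf_eq0 (negPf h2) => /eqP.
Qed.
Lemma leeR4_le4 w : (leeR4 w <= 4)%N.
Proof.
have H t : (leeZ4 t <= 2)%N by rewrite /leeZ4; case: ifP => //; case: ifP.
by rewrite /leeR4 (leq_add (H _) (H _)).
Qed.

Lemma monoE (P Q : S) y : P ^+ (4 * n - leeW y) * Q ^+ leeW y =
  \prod_(i < n) (P ^+ (4 - leeR4 (y i)) * Q ^+ leeR4 (y i)).
Proof.
rewrite big_split /= !prodrXr; congr (P ^+ _ * _).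
rewrite sumnB; last by move=> i _; exact: leeR4_le4.
by rewrite sum_nat_const card_ord mulnC.
Qed.

Lemma prodE (P Q : S) x :
  \sum_(y : vec n) chi (psi x y) * (P ^+ (4 * n - leeW y) * Q ^+ leeW y) =
  \prod_(i < n) \sum_(w : R4) chi (piZ (R4mul (x i) w)) * P ^+ (4 - leeR4 w) * Q ^+ leeR4 w.
Proof.
rewrite bigA_distr_bigA /=; apply: eq_bigr => y _.
rewrite monoE /psi (big_morph chi chiD chi0) -big_split /=.
by apply: eq_bigr => i _; rewrite mulrA.
Qed.

Definition LE (C : {set vec n}) (P Q : S) : S :=
  \sum_(c in C) P ^+ (4 * n - leeW c) * Q ^+ (leeW c).

Lemma main_gen (C : {set vec n}) (P Q : S) : is_linear_code C ->
  #|C|%:R * LE (dual C) P Q = LE C (P + Q) (P - Q).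
Proof.
move=> hC; symmetry; rewrite /LE.
transitivity (\sum_(x in C) \sum_(y : vec n) chi (psi x y) * (P ^+ (4 * n - leeW y) * Q ^+ leeW y)).
  apply: eq_bigr => x _; rewrite prodE monoE; apply: eq_bigr => i _.
  by rewrite (coordL P Q hj).
rewrite exchange_big /=.
under eq_bigr => y _ do rewrite -big_distrl /= orth //.
rewrite mulr_sumr [in RHS]big_mkcond /=; apply: eq_bigr => y _.
by case: ifP => _; rewrite ?mul0r ?mulr0.
Qed.
End Orth.
End Main.


Lemma phi_inj : injective (map_mpoly (n := 2) (ratr : rat -> algC)).
Proof.
move=> p q E; apply/mpolyP => m.
have := congr1 (mcoeff m) E; rewrite !mcoeff_map_mpoly.
exact: fmorph_inj.
Qed.

Lemma phiLE n (D : {set vec n}) (A B : {mpoly rat[2]}) :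
  map_mpoly (ratr : rat -> algC) (LeeEnum D A B) =
  LE D (map_mpoly (ratr : rat -> algC) A) (map_mpoly (ratr : rat -> algC) B).
Proof.
by rewrite /LeeEnum /LE rmorph_sum; apply: eq_bigr => c _; rewrite rmorphM !rmorphXn.
Qed.

Theorem theorem3p10 (n : nat) (C : {set vec n}) :
  is_linear_code C ->
  LeeEnum (dual C) varW varX =
  (#|C|%:R)^-1 *: LeeEnum C (varW + varX) (varW - varX).
Proof.
move=> hC.
have hj : (('i : algC)%:MP : {mpoly algC[2]}) ^+ 2 = -1.
  by rewrite -rmorphXn sqrCi rmorphN rmorph1.
have h2 : (2%:R : {mpoly algC[2]}) != 0.
  by rewrite -mpolyC_nat mpolyC_eq0 pnatr_eq0.
have hC0 : (#|C| != 0)%N.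
  by apply/eqP => /eqP; rewrite cards_eq0 => /eqP E; case: hC; rewrite E inE.
apply: phi_inj.
rewrite map_mpolyZ !phiLE rmorphD rmorphB.
rewrite -(main_gen hj h2 _ _ hC) -mul_mpolyC mulrA.
rewrite -mpolyC_nat -rmorphM /= fmorphV rmorph_nat mulVf ?pnatr_eq0 //.
by rewrite mpolyC1 mul1r.
Qed.
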